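(* Let $N=(P,T,F,I,O)$ be a pWF net with a transition $t^*$ and a place $p^*$ such that $t^*\bullet=\{p^*\}$, $\bullet p^*=\{t^*\}$, $p^*\notin I\cup O$, and $F\cap(\bullet t^*\times p^*\bullet)=\emptyset$. Let $M$ be the net with input set $I$ and output set $O$ obtained from $N$ by removing $t^*$, $p^*$ and all edges incident to them, and adding all edges in $\bullet t^*\times p^*\bullet$ (preset and postset taken in $N$). Then $M$ is a pWF net, and if $N$ is sub-sound then $M$ is sub-sound.
   Context: Petri nets and markings. A Petri net is a triple $(P,T,F)$ with $P$ a finite set of places, $T$ a finite set of transitions, $P\cap T=\emptyset$, and $F\subseteq (P\times T)\cup(T\times P)$. For a node $x$, $\bullet x=\{y\mid (y,x)\in F\}$, $x\bullet=\{y\mid (x,y)\in F\}$. A marking is a multiset over $P$ (a function $P\to\mathbb N$); sets of places are identified with bags of multiplicity one, $+,-,\le$ are pointwise, and $k.m$ is the sum of $k$ copies of $m$. Transition $t$ is enabled at $m$ iff $\bullet t\le m$, firing gives $m-\bullet t+t\bullet$, and $m\xrightarrow{*}m'$ denotes reachability by a finite (possibly empty) firing sequence. A pWF net is $(P,T,F,I,O)$ with $(P,T,F)$ a Petri net, $I,O\subseteq P$ non-empty (input/output places), every node reachable by a directed path from some node of $I$, and some node of $O$ reachable from every node; input places may have incoming edges and output places outgoing edges. Sub-soundness. A pWF net is sub-sound if for all integers $k\ge k'\ge 0$ and every marking $m'$: if $k.I\xrightarrow{*}m'+k'.O$ then $m'\xrightarrow{*}(k-k').O$. *)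

(* Defs.v *)
From Stdlib Require Relation_Operators.
From mathcomp Require Import all_boot.
Set Implicit Arguments. Unset Strict Implicit. Unset Printing Implicit Defensive.

(* A Petri net (P,T,F) over finite types of places P and transitions T.
   F is given by two boolean relations: fPT p t <-> (p,t) \in F,
   fTP t p <-> (t,p) \in F.  Nodes are P + T. *)

Definition marking (P : finType) := {ffun P -> nat}.

Section Net.
Variables (P T : finType) (fPT : P -> T -> bool) (fTP : T -> P -> bool).

Definition flow (x y : P + T) : bool :=
  match x, y with
  | inl p, inr t => fPT p t
  | inr t, inl p => fTP t p
  | _, _ => false
  end.

Definition pWF (I O : {set P}) : Prop :=
  [/\ I != set0, O != set0,
      (forall x : P + T, exists2 i, i \in I & connect flow (inl i) x) &
      (forall x : P + T, exists2 o, o \in O & connect flow x (inl o))].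

Definition preset_m (t : T) : marking P := [ffun p => nat_of_bool (fPT p t)].
Definition postset_m (t : T) : marking P := [ffun p => nat_of_bool (fTP t p)].

Definition enabled (t : T) (m : marking P) : Prop :=
  forall p, preset_m t p <= m p.

Definition fire (t : T) (m : marking P) : marking P :=
  [ffun p => m p - preset_m t p + postset_m t p].

Definition step (m m' : marking P) : Prop :=
  exists t, enabled t m /\ m' = fire t m.

Definition reach : marking P -> marking P -> Prop := Relation_Operators.clos_refl_trans (marking P) step.

Definition scale_set (k : nat) (A : {set P}) : marking P :=
  [ffun p => k * nat_of_bool (p \in A)].

Definition madd (m1 m2 : marking P) : marking P := [ffun p => m1 p + m2 p].

Definition sub_sound (I O : {set P}) : Prop :=
  forall (k k' : nat) (m' : marking P), k' <= k ->
    reach (scale_set k I) (madd m' (scale_set k' O)) ->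
    reach m' (scale_set (k - k') O).

End Net.

Section Reduce.
Variables (P T : finType) (fPT : P -> T -> bool) (fTP : T -> P -> bool)
          (ts : T) (ps : P).

Definition Pplace := {p : P | p != ps}.
Definition Ttrans := {t : T | t != ts}.

Definition red_fPT (p : Pplace) (t : Ttrans) : bool :=
  fPT (val p) (val t) || (fPT (val p) ts && fPT ps (val t)).
Definition red_fTP (t : Ttrans) (p : Pplace) : bool := fTP (val t) (val p).

Definition red_set (A : {set P}) : {set Pplace} := [set p : Pplace | val p \in A].
End Reduce.
Arguments red_fPT {P T} fPT ts ps.
Arguments red_fTP {P T} fTP ts ps.
Arguments red_set {P} ps A.

(* Main.v *)
Require Import Defs.
From mathcomp Require Import all_boot zify.
Set Implicit Arguments. Unset Strict Implicit. Unset Printing Implicit Defensive.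

Section Red.
Variables (P T : finType) (fPT : P -> T -> bool) (fTP : T -> P -> bool) (ts : T) (ps : P).
Hypothesis Hts : forall p, fTP ts p = (p == ps).
Hypothesis Hps : forall t, fTP t ps = (t == ts).
Hypothesis Hdis : forall p t, fPT p ts -> fPT ps t -> ~~ fPT p t.

Local Notation PP := (Pplace ps).
Local Notation TT := (Ttrans ts).
Local Notation rPT := (red_fPT fPT ts ps).
Local Notation rTP := (red_fTP fTP ts ps).
Local Notation fN := (flow fPT fTP).
Local Notation fM := (flow rPT rTP).

Lemma pst : fPT ps ts = false.
Proof. by apply/negP => h; move: (Hdis h h); rewrite h. Qed.

Definition emb (x : PP + TT) : P + T :=
  match x with inl q => inl (val q) | inr t => inr (val t) end.

Lemma emb_inj : injective emb.
Proof.
by case=> [q|t] [q'|t'] //= [/val_inj ->].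
Qed.

Definition Qf (i : PP) (y : P + T) :=
  (exists2 y', emb y' = y & connect fM (inl i) y') \/
  ((y = inr ts \/ y = inl ps) /\ exists2 q : PP, fPT (val q) ts & connect fM (inl i) (inl q)).

Lemma step_fwd i y z : Qf i y -> fN y z -> Qf i z.
Proof.
case: y z => [p|t] [p2|t2] //=.
- move=> hQ; case: hQ => [[[q|t'] //= [<-] hc]|[[//|[->]] [q hq hc]]] hf.
  + case: (eqVneq t2 ts) hf => [->|ht] hf.
    * by right; split; [left|exists q].
    * left; exists (inr (exist _ t2 ht)) => //.
      apply: connect_trans hc (connect1 _) => /=.
      by rewrite /red_fPT /= hf.
  + have ht : t2 != ts by apply/eqP => e; move: hf; rewrite e pst.
    left; exists (inr (exist _ t2 ht)) => //.
    apply: connect_trans hc (connect1 _) => /=.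
    by rewrite /red_fPT /= hq hf orbT.
- move=> hQ; case: hQ => [[[q|t'] //= [<-] hc]|[[[->]|//] [q hq hc]]] hf.
  + have hp : p2 != ps by apply/eqP => e; move: hf; rewrite e Hps (negPf (valP t')).
    left; exists (inl (exist _ p2 hp)) => //.
    apply: connect_trans hc (connect1 _) => /=.
    by rewrite /red_fTP /= hf.
  + move: hf; rewrite Hts => /eqP ->.
    by right; split; [right|exists q].
Qed.

Lemma fwd (i : PP) y : connect fN (inl (val i)) y -> Qf i y.
Proof.
case/connectP => p; elim/last_ind: p y => [|p z IH] y /=.
  by move=> _ ->; left; exists (inl i).
rewrite rcons_path last_rcons => /andP[hp he] ->.
exact: step_fwd (IH _ hp erefl) he.
Qed.

Definition Qb (o : PP) (y : P + T) :=
  (exists2 y', emb y' = y & connect fM y' (inl o)) \/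
  ((y = inr ts \/ y = inl ps) /\ exists2 t : TT, fPT ps (val t) & connect fM (inr t) (inl o)).

Lemma step_bwd o x y : fN x y -> Qb o y -> Qb o x.
Proof.
case: x y => [p|t] [p2|t2] //=.
- move=> hf hQ; move: hQ hf => [[[q|t'] //= [<-] hc]|[[[->]|//] [t' ht hc]]] hf.
  + case: (eqVneq p ps) hf => [e|hp] hf.
    * by right; split; [right; rewrite e|exists t'; rewrite -?e].
    * left; exists (inl (exist _ p hp)) => //.
      apply: connect_trans (connect1 _) hc => /=.
      by rewrite /red_fPT /= hf.
  + have hp : p != ps by apply/eqP => e; move: hf; rewrite e pst.
    left; exists (inl (exist _ p hp)) => //.
    apply: connect_trans (connect1 _) hc => /=.
    by rewrite /red_fPT /= hf ht orbT.
- move=> hf hQ; move: hQ hf => [[[q|t'] //= [<-] hc]|[[//|[->]] [t' ht hc]]] hf.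
  + have htt : t != ts by apply/eqP => e; move: hf; rewrite e Hts (negPf (valP q)).
    left; exists (inr (exist _ t htt)) => //.
    apply: connect_trans (connect1 _) hc => /=.
    by rewrite /red_fTP /= hf.
  + move: hf; rewrite Hps => /eqP ->.
    by right; split; [left|exists t'].
Qed.

Lemma bwd (o : PP) x : connect fN x (inl (val o)) -> Qb o x.
Proof.
case/connectP => p; elim: p x => [|z p IH] x /=.
  by move=> _ <-; left; exists (inl o).
move=> /andP[he hp] hl.
exact: step_bwd he (IH _ hp hl).
Qed.

Lemma emb_ts (x : PP + TT) : emb x = inr ts -> False.
Proof. by case: x => [q|t] //= [e]; move: (valP t); rewrite /= e eqxx. Qed.
Lemma emb_ps (x : PP + TT) : emb x = inl ps -> False.
Proof. by case: x => [q|t] //= [e]; move: (valP q); rewrite /= e eqxx. Qed.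

Lemma red_set_n0 (A : {set P}) : A != set0 -> ps \notin A -> red_set ps A != set0.
Proof.
case/set0Pn => a ha hA.
have hp : a != ps by apply/eqP => e; move: hA; rewrite -e ha.
by apply/set0Pn; exists (exist _ a hp); rewrite inE.
Qed.

Lemma pWF_red (I O : {set P}) : ps \notin I -> ps \notin O -> pWF fPT fTP I O -> pWF rPT rTP (red_set ps I) (red_set ps O).
Proof.
move=> hI hO [nI nO cI cO]; split; try exact: red_set_n0.
- move=> x; have [i iI hc] := cI (emb x).
  have hp : i != ps by apply/eqP => e; move: hI; rewrite -e iI.
  exists (exist _ i hp); first by rewrite inE.
  case: (fwd (i := exist _ i hp) hc) => [[y' /emb_inj -> //]|[[/emb_ts|/emb_ps] //]].
- move=> x; have [o oO hc] := cO (emb x).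
  have hp : o != ps by apply/eqP => e; move: hO; rewrite -e oO.
  exists (exist _ o hp); first by rewrite inE.
  case: (bwd (o := exist _ o hp) hc) => [[y' /emb_inj -> //]|[[/emb_ts|/emb_ps] //]].
Qed.

Definition lift (m : marking PP) : marking P :=
  [ffun p : P => oapp m 0 (insub p : option PP)].
Definition proj (m : marking P) : marking PP :=
  [ffun q : PP => m (val q) + m ps * preset_m fPT ts (val q)].

Lemma lift_ps m : lift m ps = 0.
Proof. by rewrite ffunE insubF //= eqxx. Qed.
Lemma lift_val m q : lift m (val q) = m q.
Proof. by rewrite ffunE valK. Qed.

Lemma lift_ps' m : oapp m 0 (insub ps : option PP) = 0.
Proof. by rewrite insubF //= eqxx. Qed.
Lemma lift_val' m q : oapp m 0 (insub (val q) : option PP) = m q.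
Proof. by rewrite valK. Qed.

Lemma PP_case (p : P) : p = ps \/ exists q : PP, p = val q.
Proof.
case: (eqVneq p ps) => [->|hp]; first by left.
by right; exists (exist _ p hp).
Qed.

Lemma preM (t : TT) (q : PP) :
  preset_m rPT t q = (fPT (val q) (val t) || (fPT (val q) ts && fPT ps (val t))).
Proof. by rewrite ffunE. Qed.

Lemma stepM_reachN m1 m2 : step rPT rTP m1 m2 -> reach fPT fTP (lift m1) (lift m2).
Proof.
move=> [[t htt] [hen ->]].
have hen' q := hen q; rewrite {hen} in hen'.
case hpt: (fPT ps t).
- set mm := fire fPT fTP ts (lift m1).
  apply: (Relation_Operators.rt_trans _ _ _ mm).
  + apply: Relation_Operators.rt_step; exists ts; split => //.
    move=> p; rewrite ffunE; case: (PP_case p) => [->|[q ->]]; first by rewrite pst.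
    have := hen' q; rewrite preM /= lift_val hpt andbT.
    by case: (fPT (val q) ts); case: (fPT _ _) => //= h; lia.
  apply: Relation_Operators.rt_step; exists t; split.
  + move=> p; rewrite /mm !ffunE; case: (PP_case p) => [->|[q ->]].
    * by rewrite hpt lift_ps' Hts eqxx pst.
    rewrite lift_val' Hts (negPf (valP q)).
    have := hen' q; rewrite preM /= hpt andbT.
    have := Hdis (p := val q) (t := t).
    rewrite hpt.
    by rewrite /reverse_coercion; case: (fPT (val q) ts); case: (fPT (val q) t) => //= hD h; try (by move: (hD isT isT)); try lia. 
  apply/ffunP => p; rewrite /mm !ffunE; case: (PP_case p) => [->|[q ->]].
    by rewrite !lift_ps' hpt pst Hts eqxx Hps (negPf htt).
  rewrite !lift_val' !ffunE Hts (negPf (valP q)) /red_fPT /red_fTP /= hpt andbT.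
  have := hen' q; rewrite preM /= hpt andbT.
  have := Hdis (p := val q) (t := t); rewrite hpt.
  by rewrite /reverse_coercion; case: (fPT (val q) ts); case: (fPT (val q) t) => //= hD h; try (by move: (hD isT isT)); lia.
- apply: Relation_Operators.rt_step; exists t; split.
  + move=> p; rewrite ffunE; case: (PP_case p) => [->|[q ->]]; first by rewrite hpt.
    by have := hen' q; rewrite preM /= hpt andbF orbF lift_val.
  apply/ffunP => p; rewrite !ffunE; case: (PP_case p) => [->|[q ->]].
    by rewrite !lift_ps' hpt Hps (negPf htt).
  by rewrite !lift_val' !ffunE /red_fPT /red_fTP /= hpt andbF orbF.
Qed.

Lemma stepN_reachM m1 m2 : step fPT fTP m1 m2 -> reach rPT rTP (proj m1) (proj m2).
Proof.
move=> [t [hen ->]].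
case: (eqVneq t ts) hen => [->|htt] hen.
  have -> : proj (fire fPT fTP ts m1) = proj m1; last exact: Relation_Operators.rt_refl.
  apply/ffunP => q; rewrite !ffunE !Hts eqxx pst (negPf (valP q)) /=.
  have := hen (val q); rewrite ffunE.
  by case: (fPT (val q) ts) => /= h; rewrite ?muln0 ?muln1; lia.
set t' : TT := exist _ t htt.
apply: Relation_Operators.rt_step; exists t'; split.
- move=> q; rewrite preM !ffunE /=.
  have := hen (val q); have := hen ps; rewrite !ffunE.
  have := Hdis (p := val q) (t := t).
  case: (fPT ps t); case: (fPT (val q) ts); case: (fPT (val q) t) => //= h1 h2 h3; try lia.
apply/ffunP => -[q hq]; rewrite !ffunE /red_fPT /red_fTP /= Hps (negPf htt).
have := hen q; have := hen ps; rewrite !ffunE.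
have := Hdis (p := q) (t := t).
case: (fPT ps t); case: (fPT q ts); case: (fPT q t) => //= h1 h2 h3; rewrite ?muln0 ?muln1 ?addn0 ?subn0; try lia.
Qed.


Lemma reachM_N m1 m2 : reach rPT rTP m1 m2 -> reach fPT fTP (lift m1) (lift m2).
Proof.
elim => [x y h|x|x y z _ h1 _ h2].
- exact: stepM_reachN.
- exact: Relation_Operators.rt_refl.
- exact: Relation_Operators.rt_trans h1 h2.
Qed.

Lemma reachN_M m1 m2 : reach fPT fTP m1 m2 -> reach rPT rTP (proj m1) (proj m2).
Proof.
elim => [x y h|x|x y z _ h1 _ h2].
- exact: stepN_reachM.
- exact: Relation_Operators.rt_refl.
- exact: Relation_Operators.rt_trans h1 h2.
Qed.

Lemma lift_scale k (A : {set P}) : ps \notin A -> lift (scale_set k (red_set ps A)) = scale_set k A.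
Proof.
move=> hA; apply/ffunP => p; case: (PP_case p) => [->|[q ->]].
  by rewrite lift_ps ffunE (negPf hA) muln0.
by rewrite lift_val !ffunE inE.
Qed.

Lemma lift_madd m1 m2 : lift (madd m1 m2) = madd (lift m1) (lift m2).
Proof.
apply/ffunP => p; case: (PP_case p) => [->|[q ->]].
  by rewrite !ffunE !lift_ps'.
by rewrite !ffunE !lift_val' ffunE.
Qed.

Lemma proj_lift m : proj (lift m) = m.
Proof. by apply/ffunP => q; rewrite !ffunE lift_ps' lift_val' mul0n addn0. Qed.

Lemma proj_scale k (A : {set P}) : ps \notin A -> proj (scale_set k A) = scale_set k (red_set ps A).
Proof.
by move=> hA; apply/ffunP => q; rewrite !ffunE (negPf hA) muln0 inE addn0.
Qed.

Lemma sound_red (I O : {set P}) : ps \notin I -> ps \notin O ->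
  sub_sound fPT fTP I O -> sub_sound rPT rTP (red_set ps I) (red_set ps O).
Proof.
move=> hI hO hs k k' m' hk hr.
have := reachM_N hr; rewrite lift_madd !lift_scale // => hr'.
have := reachN_M (hs _ _ _ hk hr').
by rewrite proj_lift proj_scale.
Qed.

End Red.

Theorem mainTheorem11 (P T : finType) (fPT : P -> T -> bool)
  (fTP : T -> P -> bool) (I O : {set P}) (ts : T) (ps : P) :
  pWF fPT fTP I O ->
  (forall p, fTP ts p = (p == ps)) ->            (* post t_star = {p_star} *)
  (forall t, fTP t ps = (t == ts)) ->            (* pre p_star = {t_star} *)
  ps \notin I -> ps \notin O ->
  (forall p t, fPT p ts -> fPT ps t -> ~~ fPT p t) ->  (* F meets no pre(t_star) x post(p_star) pair *)
  pWF (red_fPT fPT ts ps) (red_fTP fTP ts ps) (red_set ps I) (red_set ps O) /\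
  (sub_sound fPT fTP I O ->
   sub_sound (red_fPT fPT ts ps) (red_fTP fTP ts ps) (red_set ps I) (red_set ps O)).
Proof.
move=> hw Hts Hps hI hO Hdis; split.
- exact: pWF_red.
- exact: sound_red.
Qed.
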